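(* Let $\mathbf{A}',\mathbf{A}'',\mathbf{B}',\mathbf{B}''$ be $n\times n$ Hermitian non-negative definite matrices such that either $\mathbf{A}'\neq\mathbf{A}''$ or $\mathbf{B}'\neq\mathbf{B}''$. Assume that the Loewner order is total on each of the pairs $(\mathbf{A}',\mathbf{A}'')$ and $(\mathbf{B}',\mathbf{B}'')$, i.e., either $\mathbf{A}'\succeq\mathbf{A}''$ or $\mathbf{A}''\succ\mathbf{A}'$, and either $\mathbf{B}'\succeq\mathbf{B}''$ or $\mathbf{B}''\succ\mathbf{B}'$. Define $\mathbf{M}=(\mathbf{A}''-\mathbf{A}')\left[(\mathbf{I}+\mathbf{A}')^{-1}-(\mathbf{I}+\mathbf{A}'')^{-1}\right]$ and $\mathbf{N}=(\mathbf{B}''-\mathbf{B}')\left[(\mathbf{I}+\mathbf{B}'+\mathbf{A}')^{-1}-(\mathbf{I}+\mathbf{B}''+\mathbf{A}'')^{-1}\right]$. Then $\mathrm{Tr}(\mathbf{M}+\mathbf{N})\ge 0$.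
   Context: $\succeq$ denotes the Loewner order on Hermitian matrices: $\mathbf{X}\succeq\mathbf{Y}$ iff $\mathbf{X}-\mathbf{Y}$ is positive semidefinite; $\mathbf{X}\succ\mathbf{Y}$ iff $\mathbf{X}-\mathbf{Y}$ is positive definite. *)

(* Defs.v *)
From mathcomp Require Import all_boot all_order all_algebra.
Set Implicit Arguments. Unset Strict Implicit. Unset Printing Implicit Defensive.
Import Order.TTheory GRing.Theory Num.Theory.
Local Open Scope ring_scope.

(* Scalars: an arbitrary numeric algebraically closed field C (e.g. algC or
   R[i]); on C, [0 <= x] means x is real and non-negative. *)

Definition ctrmx (C : numClosedFieldType) (m n : nat) (A : 'M[C]_(m, n)) : 'M[C]_(n, m) :=
  map_mx Num.conj (A^T).

Definition hermitian (C : numClosedFieldType) (n : nat) (A : 'M[C]_n) : Prop :=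
  ctrmx A = A.

Definition psd (C : numClosedFieldType) (n : nat) (A : 'M[C]_n) : Prop :=
  hermitian A /\ forall v : 'cV[C]_n, 0 <= (ctrmx v *m A *m v) 0 0.

Definition pd (C : numClosedFieldType) (n : nat) (A : 'M[C]_n) : Prop :=
  hermitian A /\ forall v : 'cV[C]_n, v != 0 -> 0 < (ctrmx v *m A *m v) 0 0.

Definition loewner_ge (C : numClosedFieldType) (n : nat) (X Y : 'M[C]_n) : Prop :=
  psd (X - Y).
Definition loewner_gt (C : numClosedFieldType) (n : nat) (X Y : 'M[C]_n) : Prop :=
  pd (X - Y).

(* Main.v *)
Require Import Defs.
From mathcomp Require Import all_boot all_order all_algebra ring.
Import Order.TTheory GRing.Theory Num.Theory.
Local Open Scope ring_scope.
Set Implicit Arguments. Unset Strict Implicit. Unset Printing Implicit Defensive.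

Section S.
Variable C : numClosedFieldType.

Lemma ctrmx_mul m n p (A : 'M[C]_(m, n)) (B : 'M[C]_(n, p)) :
  ctrmx (A *m B) = ctrmx B *m ctrmx A.
Proof. by rewrite /ctrmx trmx_mul map_mxM. Qed.

Lemma ctrmxK m n (A : 'M[C]_(m, n)) : ctrmx (ctrmx A) = A.
Proof. by apply/matrixP=> i j; rewrite !mxE conjCK. Qed.

Lemma ctrmxD m n (A B : 'M[C]_(m, n)) : ctrmx (A + B) = ctrmx A + ctrmx B.
Proof. by apply/matrixP=> i j; rewrite !mxE rmorphD. Qed.

Lemma ctrmxN m n (A : 'M[C]_(m, n)) : ctrmx (- A) = - ctrmx A.
Proof. by apply/matrixP=> i j; rewrite !mxE rmorphN. Qed.

Lemma ctrmx1 n : ctrmx (1%:M : 'M[C]_n) = 1%:M.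
Proof. by rewrite /ctrmx trmx1 map_mx1. Qed.

Lemma ctrmx_inv n (A : 'M[C]_n) : ctrmx (invmx A) = invmx (ctrmx A).
Proof. by rewrite /ctrmx trmx_inv map_invmx. Qed.

Variable n : nat.
Implicit Types (A B S T X : 'M[C]_n).

Lemma herm_add A B : Defs.hermitian A -> Defs.hermitian B -> Defs.hermitian (A + B).
Proof. by rewrite /Defs.hermitian ctrmxD => -> ->. Qed.

Lemma herm_opp A : Defs.hermitian A -> Defs.hermitian (- A).
Proof. by rewrite /Defs.hermitian ctrmxN => ->. Qed.

Lemma psd_add A B : psd A -> psd B -> psd (A + B).
Proof.
move=> [hA pA] [hB pB]; split; first exact: herm_add.
move=> v; rewrite mulmxDr mulmxDl mxE; exact: addr_ge0.
Qed.

Lemma psd_cong m (S : 'M[C]_m) (Z : 'M[C]_(m, n)) : psd S -> psd (ctrmx Z *m S *m Z).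
Proof.
move=> [hS pS]; split.
  by rewrite /Defs.hermitian !ctrmx_mul ctrmxK hS mulmxA.
move=> v; have := pS (Z *m v).
by rewrite ctrmx_mul !mulmxA.
Qed.

Lemma psd1 : psd (1%:M : 'M[C]_n).
Proof.
split; first exact: ctrmx1.
move=> v; rewrite mulmx1 mxE; apply: sumr_ge0 => i _.
by rewrite !mxE mulrC mul_conjC_ge0.
Qed.

Lemma pd_1add A : psd A -> pd (1%:M + A).
Proof.
move=> [hA pA]; split; first by apply: herm_add => //; exact: ctrmx1.
move=> v vN0; rewrite mulmxDr mulmxDl mxE mulmx1.
apply: ltr_wpDr; first exact: pA.
rewrite mxE lt_def; apply/andP; split; last first.
  by apply: sumr_ge0 => i _; rewrite !mxE mulrC mul_conjC_ge0.
apply/negP => /eqP H0; move/negP: vN0; apply.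
move: H0; rewrite eq_sym => /eqP; rewrite psumr_eq0; last first.
  by move=> i _; rewrite !mxE mulrC mul_conjC_ge0.
move=> /allP H; apply/eqP/matrixP => i j; rewrite ord1 !mxE.
have := H i (mem_index_enum _); rewrite !mxE mulrC mul_conjC_eq0.
by move=> /eqP ->.
Qed.

Lemma pd_psd A : pd A -> psd A.
Proof.
move=> [hA pA]; split => // v; have [->|vN0] := eqVneq v 0.
  by rewrite mulmx0 mxE.
exact/ltW/pA.
Qed.

Lemma pd_addr A B : pd A -> psd B -> pd (A + B).
Proof.
move=> [hA pA] [hB pB]; split; first exact: herm_add.
by move=> v vN0; rewrite mulmxDr mulmxDl mxE; apply: ltr_wpDr; [exact: pB|exact: pA].
Qed.

Lemma pd_unit A : pd A -> A \in unitmx.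
Proof.
move=> [hA pA]; rewrite unitmxE unitfE; apply/negP => /det0P [v vN0 vA].
have w0 : ctrmx v != 0.
  apply: contra vN0 => /eqP h; apply/eqP.
  by rewrite -[v]ctrmxK h; apply/matrixP => i j; rewrite !mxE rmorph0.
have := pA _ w0; rewrite ctrmxK vA mul0mx mxE ltxx //.
Qed.

End S.

Section S2.
Variable C : numClosedFieldType.
Variable n : nat.
Implicit Types (A B S T X K : 'M[C]_n).

Lemma herm_inv X : Defs.hermitian X -> Defs.hermitian (invmx X).
Proof. by rewrite /Defs.hermitian ctrmx_inv => ->. Qed.

Lemma psd_inv X : pd X -> psd (invmx X).
Proof.
move=> pX; have uX := pd_unit pX; have [hX _] := pX.
have [_ qX] := pd_psd pX.
split; first exact: herm_inv.
move=> v; have -> : v = X *m (invmx X *m v) by rewrite mulKVmx.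
rewrite ctrmx_mul hX mulmxA mulmxK // -mulmxA mulKVmx //.
Qed.

Lemma psd_diff_inv X K : pd X -> psd K -> psd (invmx X - invmx (X + K)).
Proof.
move=> pX pK; have pP := pd_addr pX pK.
have uX := pd_unit pX; have uP := pd_unit pP.
have [hP _] := pP; have [hK _] := pK.
set P := X + K in pP uP hP *.
have hPi : ctrmx (invmx P) = invmx P by rewrite ctrmx_inv hP.
have E1 : invmx X - invmx P = invmx P *m K *m invmx X.
  have -> : K = P - X by rewrite /P addrC addKr.
  by rewrite mulmxBr mulmxBl mulVmx // mulmxK // mul1mx.
have E2 : invmx P *m K *m invmx X =
   invmx P *m K *m invmx P + (invmx P *m K) *m invmx X *m (K *m invmx P).
  rewrite -[LHS]mulmx1 -(mulmxV uP) /P [in LHS]mulmxDl !mulmxA.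
  by rewrite mulmxDr !mulmxA mulmxKV.
rewrite E1 E2; apply: psd_add.
  by rewrite -{1}hPi; apply: psd_cong.
have -> : invmx P *m K = ctrmx (K *m invmx P) by rewrite ctrmx_mul hPi hK.
by apply: psd_cong; apply: psd_inv.
Qed.

Lemma quad_ii m (S : 'M[C]_n) (Z : 'M[C]_(m, n)) i :
  psd S -> 0 <= (Z *m S *m ctrmx Z) i i.
Proof.
move=> [_ pS]; have := pS (ctrmx (row i Z)); rewrite ctrmxK.
congr (_ <= _); rewrite !mxE; apply: eq_bigr => k _; rewrite !mxE.
congr (_ * _); apply: eq_bigr => l _; rewrite !mxE //.
Qed.

Lemma tr_psd S T : psd S -> psd T -> 0 <= \tr (S *m T).
Proof.
move=> pS pT; have [hS _] := pS.
have nS : S \is normalmx.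
  by apply/normalmxP; have -> : (S ^t* )%sesqui = S := hS.
have uU := spectral_unitarymx S.
have uU' := unitarymx_unit uU.
move/orthomx_spectralP: nS.
set U := spectralmx S; set l := spectral_diag S => hSd.
have Hd : diag_mx l = U *m S *m invmx U.
  by rewrite hSd !mulmxA mulmxV // mul1mx mulmxK.
have -> : \tr (S *m T) = \tr (diag_mx l *m (U *m T *m invmx U)).
  rewrite Hd (mulmxA (U *m S *m invmx U)) (mulmxA (U *m S *m invmx U)).
  rewrite (mulmxKV uU') (mxtrace_mulC (U *m S *m T)) (mulmxA (invmx U)).
  by rewrite (mulmxA (invmx U)) (mulVmx uU') mul1mx.
rewrite (mul_diag_mx l) /mxtrace; apply: sumr_ge0 => i _; rewrite mxE.
have hi : l 0 i = (U *m S *m invmx U) i i by rewrite -Hd mxE eqxx mulr1n.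
rewrite hi invmx_unitary //; apply: mulr_ge0; exact: quad_ii.
Qed.

End S2.

Section S3.
Variable C : numClosedFieldType.
Variable n : nat.
Implicit Types (A B D E X Y P Q U V : 'M[C]_n).

Lemma tr_cyc2 A B D E : \tr (A *m B *m D *m E) = \tr (D *m E *m A *m B).
Proof. by rewrite -(mulmxA (A *m B)) mxtrace_mulC !mulmxA. Qed.

Lemma tr_cyc1 A B D E : \tr (A *m B *m D *m E) = \tr (B *m D *m E *m A).
Proof. by rewrite -!mulmxA mxtrace_mulC !mulmxA. Qed.

Lemma key1 D E P Q :
  \tr (E *m P *m (D + E) *m Q) *+ 2 + \tr (E *m Q *m (D + E) *m P) *+ 2
  + \tr (D *m P *m D *m Q) = \tr ((E + E + D) *m P *m (E + E + D) *m Q).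
Proof.
rewrite !(mulmxDl, mulmxDr, mxtraceD).
rewrite (tr_cyc2 E Q D P) (tr_cyc2 E Q E P).
ring.
Qed.

Lemma key2 D X Y P Q :
  \tr (D *m X *m D *m Y) - \tr (D *m P *m D *m Q) =
  \tr ((X - P) *m (D *m Y *m D)) + \tr ((D *m P *m D) *m (Y - Q)).
Proof.
rewrite !(mulmxBl, mulmxBr, mxtraceD, linearB) /= !mulmxA.
rewrite (tr_cyc1 D X D Y) (tr_cyc1 D P D Y).
ring.
Qed.

Lemma inv_diff U V : U \in unitmx -> V \in unitmx ->
  invmx U - invmx V = invmx U *m (V - U) *m invmx V.
Proof. by move=> uU uV; rewrite mulmxBr mulmxBl mulVmx // mulmxK // mul1mx. Qed.

Lemma inv_diff' U V : U \in unitmx -> V \in unitmx ->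
  invmx U - invmx V = invmx V *m (V - U) *m invmx U.
Proof. by move=> uU uV; rewrite mulmxBr mulmxBl mulmxK // mulVmx // mul1mx. Qed.

End S3.
Unset Implicit Arguments.

Theorem lemma1 (C : numClosedFieldType) (n : nat) (A1 A2 B1 B2 : 'M[C]_n) :
  psd A1 -> psd A2 -> psd B1 -> psd B2 ->
  (A1 <> A2 \/ B1 <> B2) ->
  (loewner_ge A1 A2 \/ loewner_gt A2 A1) ->
  (loewner_ge B1 B2 \/ loewner_gt B2 B1) ->
  let M := (A2 - A1) *m (invmx (1%:M + A1) - invmx (1%:M + A2)) in
  let N := (B2 - B1) *m (invmx (1%:M + B1 + A1) - invmx (1%:M + B2 + A2)) in
  0 <= \tr (M + N).
Proof.
move=> pA1 pA2 pB1 pB2 _ _ _; cbv zeta.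
have pX : pd (1%:M + A1) := pd_1add pA1.
have pY : pd (1%:M + A2) := pd_1add pA2.
have pP : pd (1%:M + B1 + A1) := pd_addr (pd_1add pB1) pA1.
have pQ : pd (1%:M + B2 + A2) := pd_addr (pd_1add pB2) pA2.
set X := 1%:M + A1 in pX *; set Y := 1%:M + A2 in pY *.
set P := 1%:M + B1 + A1 in pP *; set Q := 1%:M + B2 + A2 in pQ *.
set D := A2 - A1; set E := B2 - B1.
have uX := pd_unit pX; have uY := pd_unit pY.
have uP := pd_unit pP; have uQ := pd_unit pQ.
have hD : Defs.hermitian D.
  by apply: herm_add; [case: pA2 | apply: herm_opp; case: pA1].
have hE : Defs.hermitian E.
  by apply: herm_add; [case: pB2 | apply: herm_opp; case: pB1].
have YX : Y - X = D by rewrite /Y /X /D; apply/matrixP=> i j; rewrite !mxE; ring.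
have QP : Q - P = D + E.
  by rewrite /Q /P /D /E; apply/matrixP=> i j; rewrite !mxE; ring.
rewrite mxtraceD.
have tN : \tr (E *m (invmx P - invmx Q)) = \tr (E *m invmx P *m (D+E) *m invmx Q).
  by rewrite inv_diff // QP !mulmxA.
have tN' : \tr (E *m (invmx P - invmx Q)) = \tr (E *m invmx Q *m (D+E) *m invmx P).
  by rewrite inv_diff' // QP !mulmxA.
have tM : \tr (D *m (invmx X - invmx Y)) = \tr (D *m invmx X *m D *m invmx Y).
  by rewrite inv_diff // YX !mulmxA.
have k1 := key1 D E (invmx P) (invmx Q).
have k2 := key2 D (invmx X) (invmx Y) (invmx P) (invmx Q).
rewrite -tN -tN' in k1.
have hG : Defs.hermitian (E + E + D) by apply: herm_add => //; apply: herm_add.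
have cong G Z : Defs.hermitian G -> pd Z -> psd (G *m invmx Z *m G).
  move=> hG' pZ; rewrite -{1}hG'; apply: psd_cong; exact: psd_inv.
have hf : 0 <= \tr ((E + E + D) *m invmx P *m (E + E + D) *m invmx Q).
  by apply: tr_psd; [apply: cong | apply: psd_inv].
have hd : 0 <= \tr (D *m invmx P *m D *m invmx Q).
  by apply: tr_psd; [apply: cong | apply: psd_inv].
have ha : 0 <= \tr (D *m invmx X *m D *m invmx Y).
  by apply: tr_psd; [apply: cong | apply: psd_inv].
have PX : P = X + B1 by rewrite /P /X; apply/matrixP=> i j; rewrite !mxE; ring.
have QY : Q = Y + B2 by rewrite /Q /Y; apply/matrixP=> i j; rewrite !mxE; ring.
have h1 : 0 <= \tr ((invmx X - invmx P) *m (D *m invmx Y *m D)).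
  apply: tr_psd; last by apply: cong.
  by rewrite PX; apply: psd_diff_inv.
have h2 : 0 <= \tr ((D *m invmx P *m D) *m (invmx Y - invmx Q)).
  apply: tr_psd; first by apply: cong.
  by rewrite QY; apply: psd_diff_inv.
rewrite tM.
move: k1 k2 hf hd ha h1 h2.
set T := \tr (E *m (invmx P - invmx Q)).
set a := \tr (D *m invmx X *m D *m invmx Y).
set d := \tr (D *m invmx P *m D *m invmx Q).
set f := \tr ((E + E + D) *m invmx P *m (E + E + D) *m invmx Q).
set u := \tr ((invmx X - invmx P) *m (D *m invmx Y *m D)).
set w := \tr ((D *m invmx P *m D) *m (invmx Y - invmx Q)).
move=> k1 k2 hf hd ha h1 h2.
have H4 : (a + T) *+ 4 = a *+ 3 + (u + w) + f.
  rewrite -k1 -k2; ring.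
have : 0 <= (a + T) *+ 4.
  by rewrite H4; apply: addr_ge0; [apply: addr_ge0; [apply: mulrn_wge0 | apply: addr_ge0] |].
by rewrite pmulrn_lge0.
Qed.
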